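(* Let $n\geq 2$. The polynomial identity $Q_n(x,y,z,t)=Q_n(x+nz+nt,y,-t,-z)$ holds if and only if, for all $0\le k\le n-1$, $$Q_{n,k}(x,t)=(x-k+t+1)\,Q_{n-1,k}(x+t+1,t)+(n+k-2)\,Q_{n-1,k-1}(x+t+1,t).$$
   Context: Define polynomials $Q_m(x,y,z,t)$ by $Q_1=1$ and $Q_{m+1}=[x+mz+(y+t)(m+y\partial_y)]Q_m$ for $m\ge1$ ($\partial_y$ the partial derivative in $y$), and define $Q_{m,k}(x,t)$ by $Q_m(x,y,1,t)=\sum_{k=0}^{m-1}Q_{m,k}(x,t)y^k$, with the convention $Q_{m,k}=0$ if $k<0$ or $k\geq m$. *)

(* Defs.v *)
From mathcomp Require Import all_boot all_algebra.
From mathcomp Require Import mpoly.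
Set Implicit Arguments. Unset Strict Implicit. Unset Printing Implicit Defensive.
Import GRing.Theory.
Local Open Scope ring_scope.

Definition i0 : 'I_4 := @Ordinal 4 0 isT.
Definition i1 : 'I_4 := @Ordinal 4 1 isT.
Definition i2 : 'I_4 := @Ordinal 4 2 isT.
Definition i3 : 'I_4 := @Ordinal 4 3 isT.

Definition Xx : {mpoly int[4]} := 'X_i0.
Definition Xy : {mpoly int[4]} := 'X_i1.
Definition Xz : {mpoly int[4]} := 'X_i2.
Definition Xt : {mpoly int[4]} := 'X_i3.

Definition Qstep (m : nat) (P : {mpoly int[4]}) : {mpoly int[4]} :=
  (Xx + m%:R * Xz) * P + (Xy + Xt) * (m%:R * P + Xy * mderiv i1 P).

(* Qaux m = Q_{m+1} *)
Fixpoint Qaux (m : nat) : {mpoly int[4]} :=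
  match m with
  | 0 => 1
  | m'.+1 => Qstep m'.+1 (Qaux m')
  end.

(* Q m = Q_m for m >= 1 (Q 0 is an unused junk value equal to 1) *)
Definition Q (m : nat) : {mpoly int[4]} := Qaux m.-1.

Definition j0 : 'I_2 := @Ordinal 2 0 isT.
Definition j1 : 'I_2 := @Ordinal 2 1 isT.
Definition Bx : {mpoly int[2]} := 'X_j0.
Definition Bt : {mpoly int[2]} := 'X_j1.

Definition Qz1 (m : nat) : {mpoly int[4]} :=
  comp_mpoly [tuple Xx; Xy; 1; Xt] (Q m).

(* Q_{m,k}(x,t) : coefficient of y^k in Q_m(x,y,1,t), with the convention
   Q_{m,k} = 0 for k >= m. *)
Definition Qc (m k : nat) : {mpoly int[2]} :=
  if (k < m)%N then
    \sum_(mo <- msupp (Qz1 m) | (mo i1 == k)%N)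
      (Qz1 m)@_mo *: (Bx ^+ mo i0 * Bt ^+ mo i3)
  else 0.

Definition Qcpred (m k : nat) : {mpoly int[2]} :=
  if k is k'.+1 then Qc m k' else 0.

Definition shiftxt (p : {mpoly int[2]}) : {mpoly int[2]} :=
  comp_mpoly [tuple Bx + Bt + 1; Bt] p.

(* Main.v *)
Require Import Defs.
From mathcomp Require Import all_boot all_algebra.
From mathcomp Require Import mpoly.
From mathcomp Require Import ring.
Import GRing.Theory.
Local Open Scope ring_scope.

Lemma mpoly_ind2 (n : nat) (P : {mpoly int[n]} -> Prop) :
  P 1 -> (forall p q, P p -> P q -> P (p + q)) ->
  (forall (c : int) p, P p -> P (c *: p)) ->
  (forall p i, P p -> P (p * 'X_i)) -> forall p, P p.
Proof.
move=> P1 PD PZ PX.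
have P0 : P 0 by rewrite -(scale0r 1); apply: PZ.
have PXm : forall m, P 'X_[m].
  move=> m; rewrite mpolyXE_id.
  apply: (big_rec (fun x => P x)) => // i x _ Px.
  elim: (m i) => [|k IH]; first by rewrite expr0 mul1r.
  by rewrite exprS -mulrA mulrC; apply: PX.
elim/mpolyind => [//|c m p _ _ Pp]; apply: PD => //; exact: PZ.
Qed.

Lemma mpoly_morph_eq n (S : ringType) (f g : {mpoly int[n]} -> S) :
  {morph f : x y / x + y} -> {morph g : x y / x + y} ->
  {morph f : x y / x * y} -> {morph g : x y / x * y} ->
  (forall c, f c%:MP = g c%:MP) -> (forall i, f 'X_i = g 'X_i) -> f =1 g.
Proof.
move=> fD gD fM gM fC fX; elim/mpoly_ind2.
- by rewrite -mpolyC1 fC.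
- by move=> p q hp hq; rewrite fD gD hp hq.
- by move=> c p hp; rewrite -mul_mpolyC fM gM fC hp.
- by move=> p i hp; rewrite fM gM hp fX.
Qed.

Lemma compM (lq : 4.-tuple {mpoly int[4]}) p q :
  comp_mpoly lq (p * q) = comp_mpoly lq p * comp_mpoly lq q.
Proof. exact: rmorphM. Qed.

Lemma mderiv_comp (lq : 4.-tuple {mpoly int[4]}) j :
  (forall i : 'I_4, mderiv j (lq`_i) = comp_mpoly lq (mderiv j 'X_i)) ->
  forall p, mderiv j (comp_mpoly lq p) = comp_mpoly lq (mderiv j p).
Proof.
move=> hX; elim/mpoly_ind2.
- by rewrite comp_mpoly1 -mpolyC1 mderivC comp_mpoly0.
- by move=> p q hp hq; rewrite comp_mpolyD !mderivD hp hq comp_mpolyD.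
- by move=> c p hp; rewrite comp_mpolyZ !mderivZ hp comp_mpolyZ.
- move=> p i hp; rewrite compM !mderivM hp comp_mpolyXU hX.
  by rewrite comp_mpolyD !compM comp_mpolyXU.
Qed.

Lemma dX0 : mderiv i1 Xx = 0.
Proof. by rewrite /Xx mderivX mnm1E /= scale0r. Qed.
Lemma dX1 : mderiv i1 Xy = 1.
Proof. by rewrite /Xy mderivX mnm1E /= scale1r -{1}(add0m (U_(i1))%MM) addmK mpolyX0. Qed.
Lemma dX2 : mderiv i1 Xz = 0.
Proof. by rewrite /Xz mderivX mnm1E /= scale0r. Qed.
Lemma dX3 : mderiv i1 Xt = 0.
Proof. by rewrite /Xt mderivX mnm1E /= scale0r. Qed.

Lemma ord4_ind (P : 'I_4 -> Prop) : P i0 -> P i1 -> P i2 -> P i3 -> forall i, P i.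
Proof.
move=> h0 h1 h2 h3 [[|[|[|[|m]]]] Hi] //.
- by rewrite (bool_irrelevance Hi isT).
- by rewrite (bool_irrelevance Hi isT).
- by rewrite (bool_irrelevance Hi isT).
- by rewrite (bool_irrelevance Hi isT).
Qed.

Lemma prod4 (R : comNzRingType) (F : 'I_4 -> R) :
  \prod_(i<4) F i = F i0 * F i1 * F i2 * F i3.
Proof. rewrite !big_ord_recl big_ord0 mulr1 !mulrA. by congr (F _ * F _ * F _ * F _); apply: val_inj. Qed.

Lemma compM2 n k (lq : n.-tuple {mpoly int[k]}) p q :
  comp_mpoly lq (p * q) = comp_mpoly lq p * comp_mpoly lq q.
Proof. exact: rmorphM. Qed.

Lemma compN n k (lq : n.-tuple {mpoly int[k]}) (m : nat) :
  comp_mpoly lq m%:R = m%:R.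
Proof. exact: rmorph_nat. Qed.

Section Comp4.
Variables a b c d : {mpoly int[4]}.
Lemma cX0 : comp_mpoly [tuple a; b; c; d] Xx = a. Proof. by rewrite /Xx comp_mpolyXU. Qed.
Lemma cX1 : comp_mpoly [tuple a; b; c; d] Xy = b. Proof. by rewrite /Xy comp_mpolyXU. Qed.
Lemma cX2 : comp_mpoly [tuple a; b; c; d] Xz = c. Proof. by rewrite /Xz comp_mpolyXU. Qed.
Lemma cX3 : comp_mpoly [tuple a; b; c; d] Xt = d. Proof. by rewrite /Xt comp_mpolyXU. Qed.
End Comp4.

Definition D (p : {mpoly int[4]}) := Xy * mderiv i1 p.

Lemma DD p q : D (p + q) = D p + D q.
Proof. by rewrite /D mderivD mulrDr. Qed.
Lemma DB p q : D (p - q) = D p - D q.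
Proof. by rewrite /D mderivB mulrBr. Qed.
Lemma DNeg p : D (- p) = - D p.
Proof. by rewrite /D mderivN mulrN. Qed.
Lemma DM p q : D (p * q) = D p * q + p * D q.
Proof. rewrite /D mderivM; ring. Qed.
Lemma D1 : D 1 = 0.
Proof. by rewrite /D -mpolyC1 mderivC mulr0. Qed.
Lemma DN m : D m%:R = 0.
Proof. by rewrite /D mderivMn -mpolyC1 mderivC mul0rn mulr0. Qed.
Lemma DX0 : D Xx = 0. Proof. by rewrite /D dX0 mulr0. Qed.
Lemma DX1 : D Xy = Xy. Proof. by rewrite /D dX1 mulr1. Qed.
Lemma DX2 : D Xz = 0. Proof. by rewrite /D dX2 mulr0. Qed.
Lemma DX3 : D Xt = 0. Proof. by rewrite /D dX3 mulr0. Qed.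

Definition sigT : 4.-tuple {mpoly int[4]} := [tuple Xx + Xz + Xt; Xy; Xz; Xt].
Definition sig p := comp_mpoly sigT p.
Definition tauT (n : nat) : 4.-tuple {mpoly int[4]} :=
  [tuple Xx + n%:R * Xz + n%:R * Xt; Xy; - Xt; - Xz].

Lemma mderiv_sig p : mderiv i1 (sig p) = sig (mderiv i1 p).
Proof.
apply: mderiv_comp; elim/ord4_ind; rewrite -/Xx -/Xy -/Xz -/Xt /=.
- by rewrite !mderivD dX0 dX2 dX3 comp_mpoly0 !addr0.
- by rewrite dX1 comp_mpoly1.
- by rewrite dX2 comp_mpoly0.
- by rewrite dX3 comp_mpoly0.
Qed.

Lemma mderiv_tau n p : mderiv i1 (comp_mpoly (tauT n) p) = comp_mpoly (tauT n) (mderiv i1 p).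
Proof.
apply: mderiv_comp; elim/ord4_ind; rewrite -/Xx -/Xy -/Xz -/Xt /=.
- by rewrite !mderivD !mderivM dX0 dX2 dX3 !mderivMn -mpolyC1 mderivC !mul0rn comp_mpoly0; ring.
- by rewrite dX1 comp_mpoly1.
- by rewrite mderivN dX3 dX2 comp_mpoly0 oppr0.
- by rewrite mderivN dX2 dX3 comp_mpoly0 oppr0.
Qed.

Lemma D_sig p : D (sig p) = sig (D p).
Proof. by rewrite /D mderiv_sig /sig compM2 cX1. Qed.

Lemma D_tau n p : D (comp_mpoly (tauT n) p) = comp_mpoly (tauT n) (D p).
Proof. by rewrite /D mderiv_tau compM2 cX1. Qed.

Definition B' (m : nat) p := (Xx + m%:R * Xy) * p + (Xy - Xz) * D p.

Lemma QstepE k P : Qstep k P = (Xx + k%:R * Xz) * P + (Xy + Xt) * (k%:R * P + D P).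
Proof. by []. Qed.

Lemma Qstep_sig k g :
  Qstep k (sig g) = sig ((Xx - Xz - Xt + k%:R * Xz) * g + (Xy + Xt) * (k%:R * g + D g)).
Proof.
rewrite QstepE D_sig /sig !(comp_mpolyD, comp_mpolyB, compM2, compN, cX0, cX1, cX2, cX3).
rewrite ?comp_mpolyN !cX2 !cX3; ring.
Qed.

Lemma QauxS m : Qaux m.+1 = Qstep m.+1 (Qaux m).
Proof. by []. Qed.

Lemma R_lem m : Qaux m.+1 = sig (B' m.+1 (Qaux m)).
Proof.
elim: m => [|m IH].
  rewrite QauxS QstepE /B' D1 /sig !(mulr1, mulr0, addr0, comp_mpolyD, comp_mpolyB, compM2, compN, cX0, cX1, cX2, cX3).
  rewrite ?comp_mpoly1; ring.
rewrite [in LHS]QauxS [in LHS]IH Qstep_sig; congr sig.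
rewrite /B' QauxS QstepE.
rewrite !(DD, DB, DNeg, DM, DN, DX0, DX1, DX2, DX3).
ring.
Qed.

Lemma tau_comp m p : comp_mpoly (tauT m.+2) (comp_mpoly (tauT m.+1) p) = sig p.
Proof.
move: p; apply: (@mpoly_morph_eq 4 _ (fun p => comp_mpoly (tauT m.+2) (comp_mpoly (tauT m.+1) p)) sig).
- by move=> x y; rewrite !comp_mpolyD.
- by move=> x y; rewrite /sig comp_mpolyD.
- by move=> x y; rewrite !compM2.
- by move=> x y; rewrite /sig compM2.
- by move=> c; rewrite /sig !comp_mpolyC.
elim/ord4_ind; rewrite -/Xx -/Xy -/Xz -/Xt /sig /= !(cX0, cX1, cX2, cX3).
- rewrite !(comp_mpolyD, compM2, compN, cX0, cX1, cX2, cX3); ring.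
- by [].
- rewrite !(comp_mpolyN, cX3); ring.
- rewrite !(comp_mpolyN, cX2); ring.
Qed.

Lemma S_lem m : comp_mpoly (tauT m.+1) (Qaux m) = Qaux m.
Proof.
elim: m => [|m IH]; first by rewrite comp_mpoly1.
have E : comp_mpoly (tauT m.+2) (Qaux m) = sig (Qaux m) by rewrite -{1}IH tau_comp.
rewrite [in LHS]QauxS QstepE.
move Hd: (D (Qaux m)) => DP.
rewrite !(comp_mpolyD, compM2, compN, comp_mpolyN, cX0, cX1, cX2, cX3) -Hd -D_tau E.
rewrite R_lem /B'.
move Hd2: (D (Qaux m)) => DP2.
rewrite /sig !(comp_mpolyD, comp_mpolyB, comp_mpolyN, compM2, compN, cX0, cX1, cX2, cX3).
rewrite -Hd2 -/(sig (D (Qaux m))) -/(sig (Qaux m)) -D_sig.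
ring.
Qed.

Definition hr (i : 'I_4) : {poly {mpoly int[2]}} := nth 0 [:: Bx%:P; 'X; 1; Bt%:P] i.
Definition rho (p : {mpoly int[4]}) : {poly {mpoly int[2]}} :=
  mmap (fun c : int => (c%:~R : {poly {mpoly int[2]}})) hr p.

Lemma rhoD p q : rho (p + q) = rho p + rho q. Proof. exact: mmapD. Qed.
Lemma rhoB p q : rho (p - q) = rho p - rho q. Proof. exact: mmapB. Qed.
Lemma rhoNeg p : rho (- p) = - rho p. Proof. exact: mmapN. Qed.
Lemma rhoM p q : rho (p * q) = rho p * rho q. Proof. exact: rmorphM. Qed.
Lemma rho0 : rho 0 = 0. Proof. exact: mmap0. Qed.
Lemma rho1 : rho 1 = 1. Proof. exact: rmorph1. Qed.
Lemma rhoN m : rho m%:R = m%:R. Proof. exact: rmorph_nat. Qed.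
Lemma rhoC c : rho c%:MP = c%:~R. Proof. exact: mmapC. Qed.
Lemma rhoZ c p : rho (c *: p) = c%:~R * rho p. Proof. exact: mmapZ. Qed.
Lemma rhoX i : rho 'X_i = hr i. Proof. by rewrite /rho mmapX mmap1U. Qed.
Lemma rhoX0 : rho Xx = Bx%:P. Proof. exact: rhoX. Qed.
Lemma rhoX1 : rho Xy = 'X. Proof. exact: rhoX. Qed.
Lemma rhoX2 : rho Xz = 1. Proof. exact: rhoX. Qed.
Lemma rhoX3 : rho Xt = Bt%:P. Proof. exact: rhoX. Qed.

Lemma rho_mderiv p : rho (mderiv i1 p) = (rho p)^`().
Proof.
elim/mpoly_ind2: p.
- by rewrite -mpolyC1 mderivC rho0 rhoC -polyC1 derivC.
- by move=> p q hp hq; rewrite mderivD !rhoD hp hq derivD.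
- by move=> c p hp; rewrite mderivZ !rhoZ hp !mulrzl derivMz.
- move=> p i hp; rewrite mderivM rhoD !rhoM hp derivM; congr (_ + _); congr (_ * _).
  elim/ord4_ind: i; rewrite -/Xx -/Xy -/Xz -/Xt.
  + by rewrite dX0 rhoX0 derivC rho0.
  + by rewrite dX1 rhoX1 rho1 derivX.
  + by rewrite dX2 rhoX2 rho0 -polyC1 derivC.
  + by rewrite dX3 rhoX3 derivC rho0.
Qed.

Lemma rho_D p : rho (D p) = 'X * (rho p)^`().
Proof. by rewrite /D rhoM rhoX1 rho_mderiv. Qed.

Lemma coefXD (q : {poly {mpoly int[2]}}) k : ('X * q^`())`_k = q`_k *+ k.
Proof. by rewrite coefXM; case: k => [|k] //=; rewrite coef_deriv. Qed.

Lemma coefXXD (q : {poly {mpoly int[2]}}) k :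
  ('X * ('X * q^`()))`_k = if k is k'.+1 then q`_k' *+ k' else 0.
Proof. by rewrite coefXM; case: k => [|k] //=; rewrite coefXD. Qed.

Lemma coefX' (q : {poly {mpoly int[2]}}) k :
  ('X * q)`_k = if k is k'.+1 then q`_k' else 0.
Proof. by rewrite coefXM; case: k. Qed.

Lemma rho_Qstep_coef m P k :
  (rho (Qstep m P))`_k = (Bx + m%:R + (m + k)%:R * Bt) * (rho P)`_k +
     (if k is k'.+1 then (m + k')%:R * (rho P)`_k' else 0).
Proof.
rewrite QstepE; move Hd: (D P) => DP.
rewrite !(rhoD, rhoM, rhoN, rhoX0, rhoX1, rhoX2, rhoX3) -Hd rho_D.
move: (rho P) => q.
have -> : (Bx%:P + m%:R * 1) * q + ('X + Bt%:P) * (m%:R * q + 'X * q^`()) =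
   Bx%:P * q + m%:R * q + 'X * (m%:R * q) + 'X * ('X * q^`()) + Bt%:P * (m%:R * q)
   + Bt%:P * ('X * q^`()).
  move: (Bx%:P) (Bt%:P) ('X : {poly {mpoly int[2]}}) (q^`()) => a b x d; ring.
rewrite !mulr_natl !coefD !coefCM !coefMn coefX' coefXXD coefXD.
case: k => [|k] /=; rewrite ?coefMn; ring.
Qed.

Lemma deg_lem m k : (m < k)%N -> (rho (Qaux m))`_k = 0.
Proof.
elim: m k => [|m IH] k hk.
  by rewrite /= rho1 coefC; case: k hk.
rewrite QauxS rho_Qstep_coef IH ?(ltnW hk) //; case: k hk => [//|k] hk.
by rewrite IH // mulr0 mulr0 addr0.
Qed.

Lemma scale_int2 (c : int) (x : {mpoly int[2]}) : c *: x = c%:~R * x.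
Proof. by rewrite mulrzl -scaler_int intz. Qed.

Lemma rho_coef p k : (rho p)`_k =
  \sum_(mo <- msupp p | (mo i1 == k)%N) p@_mo *: (Bx ^+ mo i0 * Bt ^+ mo i3).
Proof.
rewrite /rho /mmap coef_sum [RHS]big_mkcond /=; apply: eq_bigr => mo _.
rewrite /mmap1 prod4 /hr /= expr1n mulr1.
have -> : (p@_mo)%:~R * ((Bx%:P) ^+ mo i0 * 'X ^+ mo i1 * (Bt%:P) ^+ mo i3)
   = (p@_mo *: (Bx ^+ mo i0 * Bt ^+ mo i3))%:P * 'X ^+ mo i1 :> {poly {mpoly int[2]}}.
  rewrite scale_int2 !rmorphM !rmorphXn /= rmorph_int.
  move: (Bx%:P) (Bt%:P) ('X : {poly {mpoly int[2]}}) => a b x; ring.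
rewrite coefCM coefXn; case: eqP => [->|ne]; rewrite ?eqxx ?mulr1 //.
by rewrite (introF eqP) ?mulr0 // => e; apply: ne.
Qed.

Lemma rho_comp1 m : rho (Qz1 m) = rho (Q m).
Proof.
rewrite /Qz1; move: (Q m); apply: (@mpoly_morph_eq 4 _ (fun p => rho (comp_mpoly [tuple Xx; Xy; 1; Xt] p)) rho).
- by move=> x y; rewrite comp_mpolyD rhoD.
- exact: rhoD.
- by move=> x y; rewrite compM2 rhoM.
- exact: rhoM.
- by move=> c; rewrite comp_mpolyC.
elim/ord4_ind; rewrite -/Xx -/Xy -/Xz -/Xt /=.
- by rewrite cX0.
- by rewrite cX1.
- by rewrite cX2 rho1 rhoX2.
- by rewrite cX3.
Qed.

Lemma Qc_eq m k : (0 < m)%N -> Qc m k = (rho (Q m))`_k.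
Proof.
move=> hm; rewrite /Qc; case: ifP => hk.
  by rewrite -rho_comp1 rho_coef.
rewrite /Q deg_lem //; move: hk; case: m hm => // m _ /=.
by move/negbT; rewrite -leqNgt.
Qed.

Lemma shX0 : shiftxt Bx = Bx + Bt + 1. Proof. by rewrite /shiftxt /Bx comp_mpolyXU. Qed.
Lemma shX1 : shiftxt Bt = Bt. Proof. by rewrite /shiftxt /Bt comp_mpolyXU. Qed.

Lemma rho_sig p : rho (sig p) = map_poly shiftxt (rho p).
Proof.
rewrite /shiftxt; move: p.
apply: (@mpoly_morph_eq 4 _ (fun p => rho (sig p))
   (fun p => map_poly (comp_mpoly [tuple Bx + Bt + 1; Bt]) (rho p))).
- by move=> x y; rewrite /sig comp_mpolyD rhoD.
- by move=> x y; rewrite rhoD rmorphD.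
- by move=> x y; rewrite /sig compM2 rhoM.
- by move=> x y; rewrite rhoM rmorphM.
- by move=> c; rewrite /sig comp_mpolyC rhoC rmorph_int.
elim/ord4_ind; rewrite -/Xx -/Xy -/Xz -/Xt /sig /=.
- rewrite cX0 !rhoD rhoX0 rhoX2 rhoX3 map_polyC /= -/(shiftxt Bx) shX0.
  by rewrite !rmorphD /= polyC1; ring.
- by rewrite cX1 rhoX1 map_polyX.
- by rewrite cX2 rhoX2 rmorph1.
- by rewrite cX3 rhoX3 map_polyC /= -/(shiftxt Bt) shX1.
Qed.

Lemma rho_B'coef m f k :
  (rho (B' m f))`_k = (Bx - k%:R) * (rho f)`_k +
     (if k is k'.+1 then (m + k')%:R * (rho f)`_k' else 0).
Proof.
rewrite /B'; move Hd: (D f) => DP.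
rewrite !(rhoD, rhoB, rhoM, rhoN, rhoNeg, rhoX0, rhoX1, rhoX2, rhoX3) -Hd rho_D.
move: (rho f) => q.
have -> : (Bx%:P + m%:R * 'X) * q + ('X + - 1) * ('X * q^`()) =
   Bx%:P * q + 'X * (m%:R * q) + 'X * ('X * q^`()) - 'X * q^`().
  move: (Bx%:P) ('X : {poly {mpoly int[2]}}) (q^`()) => a x d; ring.
rewrite !mulr_natl coefB !coefD !coefCM coefX' coefXXD coefXD.
case: k => [|k] /=; rewrite ?coefMn; ring.
Qed.

Lemma coef_sh (p : {poly {mpoly int[2]}}) k : (map_poly shiftxt p)`_k = shiftxt (p`_k).
Proof. exact: coef_map. Qed.
Lemma shM p q : shiftxt (p * q) = shiftxt p * shiftxt q.
Proof. exact: compM2. Qed.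
Lemma shD p q : shiftxt (p + q) = shiftxt p + shiftxt q.
Proof. exact: comp_mpolyD. Qed.
Lemma shB p q : shiftxt (p - q) = shiftxt p - shiftxt q.
Proof. exact: comp_mpolyB. Qed.
Lemma shN m : shiftxt m%:R = m%:R.
Proof. exact: compN. Qed.
Lemma sh0 : shiftxt 0 = 0.
Proof. exact: comp_mpoly0. Qed.

Theorem lemma6p1 (n : nat) (hn : (2 <= n)%N) :
  Q n = comp_mpoly [tuple Xx + n%:R * Xz + n%:R * Xt; Xy; - Xt; - Xz] (Q n)
  <->
  (forall k : nat, (k <= n.-1)%N ->
     Qc n k = (Bx - k%:R + Bt + 1) * shiftxt (Qc n.-1 k)
              + ((n + k)%:R - 2) * shiftxt (Qcpred n.-1 k)).
Proof.
case: n hn => [|[|n]] // _; split=> _.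
- move=> k hk.
  have E2 : Q n.+2 = Qaux n.+1 by [].
  have E1 : Q n.+1 = Qaux n by [].
  rewrite Qc_eq // E2 R_lem rho_sig coef_sh rho_B'coef.
  case: k hk => [|k] hk /=.
    rewrite sh0 mulr0 addr0 Qc_eq // E1 subr0 shM shX0; ring.
  rewrite !Qc_eq // E1 shD !shM shB shX0 !shN.
  rewrite !natrD /=; ring.
- by rewrite (_ : Q n.+2 = Qaux n.+1) // -[X in X = _](S_lem n.+1).
Qed.
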